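(* Let $\mathbb{K}$ be a field, $m\ge 3$, $R=\mathbb{K}[T_1,\dots,T_m]$, and $I=\langle T_1^{a_1},\dots,T_m^{a_m},T_1^{b_1}\cdots T_m^{b_m}\rangle$ with $0\le b_i<a_i$ for all $i$ and $b_i\ne0$ for at least two $i$; let $L\subset S=R[X_1,\dots,X_m,W]$ be the defining ideal of its Rees algebra. Let $\mathcal{C}\subset\{\mathbf{c}\in\mathbb{N}^m\mid |\mathbf{c}|\ge2\}$ be a finite set such that $\Gamma_0\cup\{\mathcal{P}(W^{|\mathbf{c}|},\mathbf{X}^{\mathbf{c}})\mid \mathbf{c}\in\mathcal{C}\}$ is a Gröbner basis of $L$ with respect to $\tau$, and such that $\mathcal{C}$ is closed: if $\mathbf{c}\in\mathcal{C}$, $|\mathbf{c}'|\ge 2$ and $\mathbf{c}'\prec_{\tau'}\mathbf{c}$, then $\mathbf{c}'\in\mathcal{C}$. Order $\mathcal{C}=\{\mathbf{c}_1\prec_{\tau'}\cdots\prec_{\tau'}\mathbf{c}_N\}$ and for $0\le j\le N$ set $\mathcal{H}_j=\langle\Gamma_0\cup\{\mathcal{P}(W^{|\mathbf{c}_i|},\mathbf{X}^{\mathbf{c}_i})\mid 1\le i\le j\}\rangle$. Then for every $1\le j\le N$, the colon ideal $\operatorname{in}(\mathcal{H}_{j-1}):\operatorname{in}(\mathcal{P}(W^{|\mathbf{c}_j|},\mathbf{X}^{\mathbf{c}_j}))$ is extended from $R$, i.e., it equals $(J\cap R)S$ where $J$ denotes this colon ideal.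
   Context: Write $\mathbf{T}^{\mathbf{b}}=T_1^{b_1}\cdots T_m^{b_m}$. $L$ is the kernel of the $R$-algebra map $S\to R[Z]$, $X_i\mapsto T_i^{a_i}Z$, $W\mapsto\mathbf{T}^{\mathbf{b}}Z$. Set $X_{m+1}:=W$; for $\mathbf{c}\in\mathbb{N}^m$, $\mathbf{X}^{\mathbf{c}}=\prod X_i^{c_i}$ and $|\mathbf{c}|=\sum c_i$. Let $\Psi:S\to R$ be the $R$-algebra map $X_i\mapsto T_i^{a_i}$, $W\mapsto\mathbf{T}^{\mathbf{b}}$. For monomials $M,N$ in $X_1,\dots,X_m,W$, with $g=\gcd(\Psi(M),\Psi(N))$, set $\mathcal{P}(M,N)=\frac{\Psi(N)}{g}M-\frac{\Psi(M)}{g}N$. $\Gamma_0=\{\mathcal{P}(X_i,X_j)\mid 1\le j<i\le m+1\}$. The order $\tau$ is lex on $S$ with $W>X_m>\cdots>X_1>T_1>\cdots>T_m$; $\operatorname{in}(\cdot)$ denotes leading monomial / initial ideal with respect to $\tau$. The total order $\tau'$ on $\mathbb{N}^m$: $\boldsymbol\alpha\prec_{\tau'}\boldsymbol\beta$ iff $|\boldsymbol\alpha|<|\boldsymbol\beta|$, or $|\boldsymbol\alpha|=|\boldsymbol\beta|$ and there is $i_0$ with $\alpha_{i_0}>\beta_{i_0}$ and $\alpha_i=\beta_i$ for all $i>i_0$. *)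

(* Defs.v *)
From HB Require Import structures.
From mathcomp Require Import all_boot all_order all_algebra.
From mathcomp Require Import mpoly.
Set Implicit Arguments. Unset Strict Implicit. Unset Printing Implicit Defensive.
Import GRing.Theory.
Local Open Scope ring_scope.

(* Number of variables of S = K[T_1..T_m, X_1..X_m, W].
   Layout of variable indices (0-based): T_{i+1} |-> i (i < m),
   X_{i+1} |-> m + i (i < m), W = X_{m+1} |-> m + m. *)
Definition nS (m : nat) : nat := (m + m).+1.

Section Defs.
Variables (K : fieldType) (m : nat) (a b : 'I_m -> nat).

Local Notation n := (nS m).
Local Notation SP := {mpoly K[n]}.

Definition tidx (i : 'I_m) : 'I_n := inord i.
Definition xidx (i : 'I_m) : 'I_n := inord (m + i).
Definition widx : 'I_n := inord (m + m).

(* X_{i+1} for i < m, and X_{m+1} = W for i = m, as monomials *)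
Definition xw (i : nat) : 'X_{1..n} := U_(@inord (m + m) (m + i))%MM.

Definition tmono (e : 'I_m -> nat) : 'X_{1..n} :=
  [multinom oapp e 0%N (insub (nat_of_ord k) : option 'I_m) | k < n].

Definition xmono (c : 'I_m -> nat) : 'X_{1..n} :=
  [multinom (if m <= k then oapp c 0%N (insub (k - m)%N : option 'I_m) else 0%N)
   | k < n].

(* exponent vector (in T) of Psi(M), Psi : X_i |-> T_i^{a_i}, W |-> T^b *)
Definition psiT (M : 'X_{1..n}) (i : 'I_m) : nat :=
  (M (tidx i) + a i * M (xidx i) + b i * M widx)%N.

(* P(M,N) = Psi(N)/g * M - Psi(M)/g * N,  g = gcd(Psi M, Psi N) *)
Definition Ppol (M N : 'X_{1..n}) : SP :=
  let g := fun i => minn (psiT M i) (psiT N i) in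
  'X_[mnm_add (tmono (fun i => psiT N i - g i)%N) M]
  - 'X_[mnm_add (tmono (fun i => psiT M i - g i)%N) N].

Definition Gamma0 (f : SP) : Prop :=
  exists i j : nat, (j < i <= m)%N /\ f = Ppol (xw i) (xw j).

Definition cabs (c : {ffun 'I_m -> nat}) : nat := (\sum_(i < m) c i)%N.

Definition Pc (c : {ffun 'I_m -> nat}) : SP :=
  Ppol (U_(widx) *+ cabs c)%MM (xmono c).

Definition tault (al be : {ffun 'I_m -> nat}) : bool :=
  (cabs al < cabs be)%N ||
  ((cabs al == cabs be) &&
   [exists i0 : 'I_m, (be i0 < al i0)%N &&
      [forall i : 'I_m, (i0 < i)%N ==> (al i == be i)]]).

(* lex order tau: W > X_m > ... > X_1 > T_1 > ... > T_m *)
Definition ord_list : seq 'I_n :=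
  [seq inord k | k <- (m + m)%N :: rev (iota m m) ++ iota 0 m].
Definition lexkey (M : 'X_{1..n}) : seq nat := [seq M k | k <- ord_list].
Fixpoint lexlt (s1 s2 : seq nat) : bool :=
  match s1, s2 with
  | x :: s1', y :: s2' => (x < y)%N || ((x == y) && lexlt s1' s2')
  | _, _ => false
  end.
Definition mlt_tau (M N : 'X_{1..n}) : bool := lexlt (lexkey M) (lexkey N).

(* leading monomial w.r.t. tau (the tau-maximum of the support; 0 for f = 0) *)
Definition lm (f : SP) : 'X_{1..n} :=
  foldr (fun x acc => if mlt_tau acc x then x else acc) 0%MM (msupp f).

Definition ideal_gen (G : SP -> Prop) : SP -> Prop :=
  fun f => exists s : seq (SP * SP),
    (forall p, p \in s -> G p.2) /\ f = \sum_(p <- s) p.1 * p.2.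

Definition init_ideal (I : SP -> Prop) : SP -> Prop :=
  ideal_gen (fun f => exists g, I g /\ g != 0 /\ f = 'X_[lm g]).

Definition colon (I : SP -> Prop) (g : SP) : SP -> Prop := fun f => I (f * g).

Definition inR (f : SP) : Prop :=
  forall M, M \in msupp f -> forall k : 'I_n, (m <= k)%N -> M k = 0%N.

Definition extended (J : SP -> Prop) : SP -> Prop :=
  ideal_gen (fun g => J g /\ inR g).

(* L = kernel of S -> R[Z], T_i |-> T_i, X_i |-> T_i^{a_i} Z, W |-> T^b Z;
   R[Z] = K[T_1..T_m, Z] with Z the variable of index m *)
Definition reesT (k : nat) : {mpoly K[m.+1]} := 'X_(@inord m k).
Definition reesZ : {mpoly K[m.+1]} := 'X_(@inord m m).
Definition aN (k : nat) : nat := oapp a 0%N (insub k : option 'I_m).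
Definition reesImg (k : 'I_n) : {mpoly K[m.+1]} :=
  if (k < m)%N then reesT k
  else if (k < m + m)%N then reesT (k - m) ^+ aN (k - m) * reesZ
  else (\prod_(i < m) (reesT i ^+ b i)) * reesZ.
Definition reesL (f : SP) : Prop := mmap (@mpolyC m.+1 K) reesImg f = 0.

Definition groebner (G I : SP -> Prop) : Prop :=
  (forall g, G g -> I g) /\ (forall f, init_ideal I f <-> init_ideal G f).

(* H_j = < Gamma0 cup { P(W^{|c_i|}, X^{c_i}) | 1 <= i <= j } > ,
   with C = [:: c_1; ...; c_N] *)
Definition Hj (C : seq {ffun 'I_m -> nat}) (j : nat) : SP -> Prop :=
  ideal_gen (fun f => Gamma0 f \/
    exists i, (i < j)%N /\ f = Pc (nth [ffun=> 0%N] C i)).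

End Defs.

(* Main.v *)
From Pilot Require Import Defs.
From HB Require Import structures.
From mathcomp Require Import all_boot all_order all_algebra.
From mathcomp Require Import mpoly.
From mathcomp Require Import zify.
From Stdlib Require Import Classical.
Set Implicit Arguments. Unset Strict Implicit. Unset Printing Implicit Defensive.
Import GRing.Theory.
Local Open Scope ring_scope.

Notation TM := Pilot.Defs.tmono.

Lemma tidxE m (i : 'I_m) : nat_of_ord (tidx i) = i.
Proof. have h := ltn_ord i; rewrite /tidx inordK //= /nS; lia. Qed.
Lemma xidxE m (i : 'I_m) : nat_of_ord (xidx i) = (m + i)%N.
Proof. have h := ltn_ord i; rewrite /xidx inordK //= /nS; lia. Qed.
Lemma widxE m : nat_of_ord (widx m) = (m + m)%N.
Proof. by rewrite /widx inordK //= /nS; lia. Qed.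

Lemma TM_t m (e : 'I_m -> nat) i : TM e (tidx i) = e i.
Proof.
rewrite /Defs.tmono mnmE tidxE; case: insubP => [j _ /val_inj -> //|].
by rewrite ltn_ord.
Qed.
Lemma TM_x m (e : 'I_m -> nat) i : TM e (xidx i) = 0%N.
Proof.
rewrite /Defs.tmono mnmE xidxE; case: insubP => [j /=|//]; lia.
Qed.
Lemma TM_w m (e : 'I_m -> nat) : TM e (widx m) = 0%N.
Proof.
rewrite /Defs.tmono mnmE widxE; case: insubP => [j /=|//].
have := ltn_ord j; lia.
Qed.

Lemma XM_t m (c : 'I_m -> nat) i : xmono c (tidx i) = 0%N.
Proof. rewrite /xmono mnmE tidxE; have := ltn_ord i; case: leqP => //; lia. Qed.
Lemma XM_x m (c : 'I_m -> nat) i : xmono c (xidx i) = c i.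
Proof.
rewrite /xmono mnmE xidxE leq_addr addKn.
by case: insubP => [j _ /val_inj -> //|]; rewrite ltn_ord.
Qed.
Lemma XM_w m (c : 'I_m -> nat) : xmono c (widx m) = 0%N.
Proof.
rewrite /xmono mnmE widxE leq_addr addKn.
by case: insubP => [j /= ?|//]; lia.
Qed.

Lemma idx_cases m (k : 'I_(nS m)) :
  (exists i : 'I_m, k = tidx i) \/ (exists i : 'I_m, k = xidx i) \/ k = widx m.
Proof.
have hk : (k < (m + m).+1)%N by exact: ltn_ord k.
case: (ltnP k m) => h1.
  by left; exists (Ordinal h1); apply: ord_inj; rewrite tidxE.
case: (ltnP k (m + m)) => h2.
  have h3 : (k - m < m)%N by lia.
  by right; left; exists (Ordinal h3); apply: ord_inj; rewrite xidxE /=; lia.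
by right; right; apply: ord_inj; rewrite widxE; lia.
Qed.

Lemma mnm_eq3 m (M N : 'X_{1..nS m}) :
  (forall i, M (tidx i) = N (tidx i)) -> (forall i, M (xidx i) = N (xidx i)) ->
  M (widx m) = N (widx m) -> M = N.
Proof.
move=> h1 h2 h3; apply/mnmP => k.
by case: (idx_cases k) => [[i ->]|[[i ->]|->]].
Qed.

Lemma lem3 m (M N : 'X_{1..nS m}) :
  (forall i, M (tidx i) <= N (tidx i))%N -> (forall i, M (xidx i) <= N (xidx i))%N ->
  (M (widx m) <= N (widx m))%N -> (M <= N)%MM.
Proof.
move=> h1 h2 h3; apply/mnm_lepP => k.
by case: (idx_cases k) => [[i ->]|[[i ->]|->]].
Qed.

Lemma UW_t m k i : (U_(widx m) *+ k)%MM (tidx i) = 0%N.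
Proof.
rewrite mulmnE mnm1E; case: eqP => [/(congr1 (@nat_of_ord _))|]; last by rewrite mul0n.
rewrite widxE tidxE; have := ltn_ord i; lia.
Qed.
Lemma UW_x m k i : (U_(widx m) *+ k)%MM (xidx i) = 0%N.
Proof.
rewrite mulmnE mnm1E; case: eqP => [/(congr1 (@nat_of_ord _))|]; last by rewrite mul0n.
rewrite widxE xidxE; have := ltn_ord i; lia.
Qed.
Lemma UW_w m k : (U_(widx m) *+ k)%MM (widx m) = k.
Proof. by rewrite mulmnE mnm1E eqxx mul1n. Qed.

Lemma xwW m : xw m m = U_(widx m)%MM.
Proof. by []. Qed.
Lemma xwX m (l : 'I_m) : xw m l = U_(xidx l)%MM.
Proof. by []. Qed.

Lemma U_eval m (j k : 'I_(nS m)) : U_(j)%MM k = (j == k) :> nat.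
Proof. by rewrite mnm1E. Qed.

Lemma tx_neq m (i j : 'I_m) : (tidx i == xidx j) = false.
Proof. apply/negbTE/eqP => /(congr1 (@nat_of_ord _)); rewrite tidxE xidxE; have := ltn_ord i; lia. Qed.
Lemma tw_neq m (i : 'I_m) : (tidx i == widx m) = false.
Proof. apply/negbTE/eqP => /(congr1 (@nat_of_ord _)); rewrite tidxE widxE; have := ltn_ord i; lia. Qed.
Lemma xw_neq m (i : 'I_m) : (xidx i == widx m) = false.
Proof. apply/negbTE/eqP => /(congr1 (@nat_of_ord _)); rewrite xidxE widxE; have := ltn_ord i; lia. Qed.
Lemma xx_eq m (i j : 'I_m) : (xidx i == xidx j) = (i == j).
Proof.
apply/eqP/eqP => [/(congr1 (@nat_of_ord _))|->//]; rewrite !xidxE => h; apply: ord_inj; lia.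
Qed.
Lemma tt_eq m (i j : 'I_m) : (tidx i == tidx j) = (i == j).
Proof.
apply/eqP/eqP => [/(congr1 (@nat_of_ord _))|->//]; rewrite !tidxE => h; apply: ord_inj; lia.
Qed.
Lemma wt_neq m (i : 'I_m) : (widx m == tidx i) = false.
Proof. by rewrite eq_sym tw_neq. Qed.
Lemma wx_neq m (i : 'I_m) : (widx m == xidx i) = false.
Proof. by rewrite eq_sym xw_neq. Qed.
Lemma xt_neq m (i j : 'I_m) : (xidx i == tidx j) = false.
Proof. by rewrite eq_sym tx_neq. Qed.

Lemma lexlt_irr s : lexlt s s = false.
Proof. by elim: s => //= x s ->; rewrite ltnn eqxx. Qed.

Lemma lexlt_trans s1 s2 s3 : lexlt s1 s2 -> lexlt s2 s3 -> lexlt s1 s3.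
Proof.
elim: s1 s2 s3 => [|x s1 IH] [|y s2] [|z s3] //=.
case/orP => [h1|/andP[/eqP <- h1]]; case/orP => [h2|/andP[/eqP <- h2]].
- by rewrite (ltn_trans h1 h2).
- by rewrite h1.
- by rewrite h2.
- by rewrite (IH _ _ h1 h2) eqxx orbT.
Qed.

Lemma lexlt_total s1 s2 : size s1 = size s2 -> s1 != s2 -> lexlt s1 s2 || lexlt s2 s1.
Proof.
elim: s1 s2 => [|x s1 IH] [|y s2] //= [hs] hne.
case: (ltngtP x y) => hxy //=.
subst y; rewrite ?eqxx ?ltnn /=; apply: IH => //.
by apply: contra hne => /eqP ->.
Qed.

Lemma lexlt_zero s t : all (fun x => x == 0%N) t -> lexlt s t = false.
Proof.
elim: s t => [|x s IH] [|y t] //= /andP[/eqP -> h].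
by rewrite ltn0 IH // andbF.
Qed.

Lemma mem_ord_list m (k : 'I_(nS m)) : k \in ord_list m.
Proof.
rewrite /ord_list; apply/mapP; exists (nat_of_ord k); last by rewrite inord_val.
have hk : (k < (m + m).+1)%N by exact: ltn_ord k.
rewrite inE mem_cat mem_rev !mem_iota.
rewrite add0n leq0n /=.
case: (ltnP k m) => h1; first by rewrite !orbT.
case: (ltnP k (m + m)) => h2 /=; first by rewrite ?orbT ?andbT.
apply/orP; left; apply/eqP; lia.
Qed.

Lemma lexkey_inj m : injective (@lexkey m).
Proof.
move=> M N h; apply/mnmP => k.
have := mem_ord_list k.
move: h; rewrite /lexkey; elim: (ord_list m) => //= x s IH [h1 h2].
by rewrite inE => /orP[/eqP ->|/IH]; [|apply].
Qed.

Lemma size_lexkey m (M : 'X_{1..nS m}) : size (lexkey M) = size (ord_list m).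
Proof. by rewrite size_map. Qed.

Lemma mlt_irr m (M : 'X_{1..nS m}) : mlt_tau M M = false.
Proof. exact: lexlt_irr. Qed.
Lemma mlt_trans m (M N P : 'X_{1..nS m}) : mlt_tau M N -> mlt_tau N P -> mlt_tau M P.
Proof. exact: lexlt_trans. Qed.
Lemma mlt_total m (M N : 'X_{1..nS m}) : M != N -> mlt_tau M N || mlt_tau N M.
Proof.
move=> h; apply: lexlt_total; first by rewrite !size_lexkey.
by apply: contra h => /eqP /lexkey_inj ->.
Qed.
Lemma mlt_0 m (M : 'X_{1..nS m}) : mlt_tau M 0%MM = false.
Proof.
apply: lexlt_zero; rewrite /lexkey all_map; apply/allP => k _ /=.
by rewrite mnm0E.
Qed.
Lemma mlt_W m (M N : 'X_{1..nS m}) : (M (widx m) < N (widx m))%N -> mlt_tau M N.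
Proof. by rewrite /mlt_tau /lexkey /ord_list /= => ->. Qed.

Definition lmf m (s : seq 'X_{1..nS m}) :=
  foldr (fun x acc => if mlt_tau acc x then x else acc) 0%MM s.

Lemma lmf_max m (s : seq 'X_{1..nS m}) y : y \in s -> ~~ mlt_tau (lmf s) y.
Proof.
elim: s => //= x s IH; rewrite inE => /orP[/eqP ->|hy].
  by case: ifP => h; rewrite ?mlt_irr // h.
case: ifP => h; last exact: IH.
apply/negP => hxy; have := IH hy; rewrite (mlt_trans h hxy) //.
Qed.

Lemma lmf_mem m (s : seq 'X_{1..nS m}) : s != [::] -> lmf s \in s.
Proof.
elim: s => //= x s IH _; case: ifP => h; first by rewrite inE eqxx.
case: s IH h => [|y s] IH h /=.
  rewrite inE; apply/eqP; case: (eqVneq x 0%MM) => // hx.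
  by have := mlt_total hx; rewrite h mlt_0.
by rewrite inE IH // orbT.
Qed.

Lemma lm_supp (K : fieldType) m (g : {mpoly K[nS m]}) : g != 0 -> lm g \in msupp g.
Proof. by move=> hg; apply: lmf_mem; rewrite msupp_eq0. Qed.

Lemma lm_max (K : fieldType) m (g : {mpoly K[nS m]}) N : N \in msupp g -> ~~ mlt_tau (lm g) N.
Proof. exact: lmf_max. Qed.

Lemma lm_unique (K : fieldType) m (g : {mpoly K[nS m]}) A :
  A \in msupp g -> (forall N, N \in msupp g -> N != A -> mlt_tau N A) -> lm g = A.
Proof.
move=> hA h; have hg : g != 0 by apply: contraTneq hA => ->; rewrite msupp0.
apply/eqP; apply/negPn/negP => hne.
by have := lm_max hA; rewrite h ?lm_supp.
Qed.

Lemma binom_coef (K : fieldType) m (A B N : 'X_{1..nS m}) :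
  ('X_[A] - 'X_[B] : {mpoly K[nS m]})@_N = (A == N)%:R - (B == N)%:R.
Proof. by rewrite mcoeffB !mcoeffX. Qed.

Lemma binom_suppA (K : fieldType) m (A B : 'X_{1..nS m}) :
  A != B -> A \in msupp ('X_[A] - 'X_[B] : {mpoly K[nS m]}).
Proof.
move=> h; have h' : (B == A) = false by rewrite eq_sym (negbTE h).
rewrite mcoeff_msupp binom_coef eqxx h' subr0.
exact: oner_neq0.
Qed.

Lemma binom_supp (K : fieldType) m (A B N : 'X_{1..nS m}) :
  N \in msupp ('X_[A] - 'X_[B] : {mpoly K[nS m]}) -> N = A \/ N = B.
Proof.
rewrite mcoeff_msupp binom_coef.
case: (eqVneq A N) => [->|_]; first by left.
by case: (eqVneq B N) => [->|_]; [right|rewrite subrr eqxx].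
Qed.

Lemma binom_neq0 (K : fieldType) m (A B : 'X_{1..nS m}) :
  A != B -> ('X_[A] - 'X_[B] : {mpoly K[nS m]}) != 0.
Proof. by move=> h; apply: contraTneq (binom_suppA K h) => ->; rewrite msupp0. Qed.

Lemma binom_lm (K : fieldType) m (A B : 'X_{1..nS m}) :
  mlt_tau B A -> lm ('X_[A] - 'X_[B] : {mpoly K[nS m]}) = A.
Proof.
move=> h; have hAB : A != B by apply: contraTneq h => ->; rewrite mlt_irr.
apply: lm_unique; first exact: binom_suppA.
by move=> N /binom_supp [->|->]; rewrite ?eqxx.
Qed.

Lemma binom_lm2 (K : fieldType) m (A B : 'X_{1..nS m}) :
  A != B -> lm ('X_[A] - 'X_[B] : {mpoly K[nS m]}) = A \/
            lm ('X_[A] - 'X_[B] : {mpoly K[nS m]}) = B.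
Proof. by move=> h; apply: binom_supp; apply: lm_supp; apply: binom_neq0. Qed.

Definition zdeg m (M : 'X_{1..nS m}) := (\sum_(i < m) M (xidx i) + M (widx m))%N.

Lemma psiT_add m (a b : 'I_m -> nat) M N i :
  psiT a b (M + N)%MM i = (psiT a b M i + psiT a b N i)%N.
Proof. rewrite /psiT !mnmDE !mulnDr; lia. Qed.
Lemma psiT_TM m (a b : 'I_m -> nat) e i : psiT a b (TM e) i = e i.
Proof. by rewrite /psiT TM_t TM_x TM_w !muln0 !addn0. Qed.
Lemma psiT_XM m (a b : 'I_m -> nat) c i : psiT a b (xmono c) i = (a i * c i)%N.
Proof. by rewrite /psiT XM_t XM_x XM_w muln0 addn0. Qed.
Lemma psiT_UW m (a b : 'I_m -> nat) k i : psiT a b (U_(widx m) *+ k)%MM i = (b i * k)%N.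
Proof. by rewrite /psiT UW_t UW_x UW_w muln0. Qed.
Lemma psiT_xwX m (a b : 'I_m -> nat) (l : 'I_m) i :
  psiT a b (xw m l) i = (a i * (l == i))%N.
Proof.
rewrite /psiT xwX !U_eval xt_neq xx_eq xw_neq.
by rewrite muln0 addn0.
Qed.
Lemma psiT_xwW m (a b : 'I_m -> nat) i : psiT a b (xw m m) i = b i.
Proof.
by rewrite /psiT xwW !U_eval wt_neq wx_neq eqxx muln0 muln1.
Qed.

Lemma zdeg_add m (M N : 'X_{1..nS m}) : zdeg (M + N)%MM = (zdeg M + zdeg N)%N.
Proof.
rewrite /zdeg mnmDE; under eq_bigr do rewrite mnmDE.
rewrite big_split /=; lia.
Qed.
Lemma zdeg_TM m (e : 'I_m -> nat) : zdeg (TM e) = 0%N.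
Proof. by rewrite /zdeg TM_w big1 // => i _; rewrite TM_x. Qed.
Lemma zdeg_XM m (c : {ffun 'I_m -> nat}) : zdeg (xmono c) = cabs c.
Proof. by rewrite /zdeg XM_w addn0 /cabs; apply: eq_bigr => i _; rewrite XM_x. Qed.
Lemma zdeg_UW m k : zdeg (U_(widx m) *+ k)%MM = k.
Proof. by rewrite /zdeg UW_w big1 // => i _; rewrite UW_x. Qed.
Lemma zdeg_xwX m (l : 'I_m) : zdeg (xw m l) = 1%N.
Proof.
rewrite /zdeg xwX; under eq_bigr do rewrite U_eval xx_eq.
rewrite U_eval xw_neq addn0 (bigD1 l) //= eqxx big1 //.
by move=> i /negbTE hi; rewrite eq_sym hi.
Qed.
Lemma zdeg_xwW m : zdeg (xw m m) = 1%N.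
Proof.
rewrite /zdeg xwW U_eval eqxx big1 // => i _.
by rewrite U_eval wx_neq.
Qed.

Definition PA m (a b : 'I_m -> nat) (M N : 'X_{1..nS m}) : 'X_{1..nS m} :=
  (TM (fun i => (psiT a b N i - minn (psiT a b M i) (psiT a b N i))%N) + M)%MM.
Definition PB m (a b : 'I_m -> nat) (M N : 'X_{1..nS m}) : 'X_{1..nS m} :=
  (TM (fun i => (psiT a b M i - minn (psiT a b M i) (psiT a b N i))%N) + N)%MM.

Lemma PpolE (K : fieldType) m (a b : 'I_m -> nat) M N :
  Ppol K a b M N = 'X_[PA a b M N] - 'X_[PB a b M N].
Proof. by []. Qed.

Lemma psiT_PAB m (a b : 'I_m -> nat) M N i :
  psiT a b (PA a b M N) i = psiT a b (PB a b M N) i.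
Proof. rewrite /PA /PB !psiT_add !psiT_TM; lia. Qed.
Lemma zdeg_PA m (a b : 'I_m -> nat) M N : zdeg (PA a b M N) = zdeg M.
Proof. by rewrite /PA zdeg_add zdeg_TM. Qed.
Lemma zdeg_PB m (a b : 'I_m -> nat) M N : zdeg (PB a b M N) = zdeg N.
Proof. by rewrite /PB zdeg_add zdeg_TM. Qed.
Lemma PA_w m (a b : 'I_m -> nat) M N : PA a b M N (widx m) = M (widx m).
Proof. by rewrite /PA mnmDE TM_w. Qed.
Lemma PB_w m (a b : 'I_m -> nat) M N : PB a b M N (widx m) = N (widx m).
Proof. by rewrite /PB mnmDE TM_w. Qed.
Lemma PA_x m (a b : 'I_m -> nat) M N i : PA a b M N (xidx i) = M (xidx i).
Proof. by rewrite /PA mnmDE TM_x. Qed.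
Lemma PB_x m (a b : 'I_m -> nat) M N i : PB a b M N (xidx i) = N (xidx i).
Proof. by rewrite /PB mnmDE TM_x. Qed.
Lemma PA_t m (a b : 'I_m -> nat) M N i : PA a b M N (tidx i) =
  (psiT a b N i - minn (psiT a b M i) (psiT a b N i) + M (tidx i))%N.
Proof. by rewrite /PA mnmDE TM_t. Qed.
Lemma PB_t m (a b : 'I_m -> nat) M N i : PB a b M N (tidx i) =
  (psiT a b M i - minn (psiT a b M i) (psiT a b N i) + N (tidx i))%N.
Proof. by rewrite /PB mnmDE TM_t. Qed.

Lemma PA_Wmove_t m (a b : 'I_m -> nat) (l : 'I_m) i :
  PA a b (xw m m) (xw m l) (tidx i) = if i == l then (a l - b l)%N else 0%N.
Proof.
rewrite PA_t psiT_xwW psiT_xwX xwW U_eval wt_neq addn0.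
case: (eqVneq i l) => [->|h]; last first.
  by rewrite muln0.
rewrite muln1; lia.
Qed.
Lemma PA_Wmove_x m (a b : 'I_m -> nat) (l : 'I_m) i :
  PA a b (xw m m) (xw m l) (xidx i) = 0%N.
Proof. by rewrite PA_x xwW U_eval wx_neq. Qed.
Lemma PA_Wmove_w m (a b : 'I_m -> nat) (l : 'I_m) :
  PA a b (xw m m) (xw m l) (widx m) = 1%N.
Proof. by rewrite PA_w xwW U_eval eqxx. Qed.
Lemma PB_Wmove_w m (a b : 'I_m -> nat) (l : 'I_m) :
  PB a b (xw m m) (xw m l) (widx m) = 0%N.
Proof. by rewrite PB_w xwX U_eval xw_neq. Qed.

Definition gam m (a b : 'I_m -> nat) (c : {ffun 'I_m -> nat}) i :=
  (a i * c i - b i * cabs c)%N.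
Lemma PA_Pc_t m (a b : 'I_m -> nat) c i :
  PA a b (U_(widx m) *+ cabs c)%MM (xmono c) (tidx i) = gam a b c i.
Proof. rewrite PA_t psiT_UW psiT_XM UW_t /gam; lia. Qed.
Lemma PA_Pc_x m (a b : 'I_m -> nat) c i :
  PA a b (U_(widx m) *+ cabs c)%MM (xmono c) (xidx i) = 0%N.
Proof. by rewrite PA_x UW_x. Qed.
Lemma PA_Pc_w m (a b : 'I_m -> nat) c :
  PA a b (U_(widx m) *+ cabs c)%MM (xmono c) (widx m) = cabs c.
Proof. by rewrite PA_w UW_w. Qed.
Lemma PB_Pc_w m (a b : 'I_m -> nat) c :
  PB a b (U_(widx m) *+ cabs c)%MM (xmono c) (widx m) = 0%N.
Proof. by rewrite PB_w XM_w. Qed.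

Lemma PcE (K : fieldType) m (a b : 'I_m -> nat) c :
  Pc K a b c = 'X_[PA a b (U_(widx m) *+ cabs c)%MM (xmono c)]
             - 'X_[PB a b (U_(widx m) *+ cabs c)%MM (xmono c)].
Proof. by []. Qed.

Lemma neq_by_w m (M N : 'X_{1..nS m}) : M (widx m) != N (widx m) -> M != N.
Proof. by apply: contra => /eqP ->. Qed.

Definition mkm n B (f : {ffun 'I_n -> 'I_B.+1}) : 'X_{1..n} := [multinom (f i : nat) | i < n].

Lemma mkm_inj n B : injective (@mkm n B).
Proof.
move=> f1 f2 h; apply/ffunP => i; apply: ord_inj.
by have := congr1 (fun M : 'X_{1..n} => M i) h; rewrite /mkm !mnmE.
Qed.

Lemma mkm_of n B (N : 'X_{1..n}) : (forall k, N k <= B)%N ->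
  mkm [ffun k => (inord (N k) : 'I_B.+1)] = N.
Proof. by move=> h; apply/mnmP => k; rewrite /mkm mnmE ffunE inordK // ltnS. Qed.

Definition Lam (K : fieldType) n B (P : pred 'X_{1..n}) (g : {mpoly K[n]}) : K :=
  \sum_(f : {ffun 'I_n -> 'I_B.+1} | P (mkm f)) g@_(mkm f).

Lemma Lam_add (K : fieldType) n B P (g1 g2 : {mpoly K[n]}) :
  Lam B P (g1 + g2) = Lam B P g1 + Lam B P g2.
Proof. by rewrite /Lam -big_split /=; apply: eq_bigr => f _; rewrite mcoeffD. Qed.

Lemma Lam_scale (K : fieldType) n B P (c : K) (g : {mpoly K[n]}) :
  Lam B P (c *: g) = c * Lam B P g.
Proof. by rewrite /Lam mulr_sumr; apply: eq_bigr => f _; rewrite mcoeffZ. Qed.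

Lemma Lam_opp (K : fieldType) n B P (g : {mpoly K[n]}) :
  Lam B P (- g) = - Lam B P g.
Proof. by rewrite /Lam -sumrN; apply: eq_bigr => f _; rewrite mcoeffN. Qed.

Lemma Lam0 (K : fieldType) n B P : Lam B P (0 : {mpoly K[n]}) = 0.
Proof. by rewrite /Lam big1 // => f _; rewrite mcoeff0. Qed.

Lemma Lam_sum (K : fieldType) n B P (T : Type) (s : seq T) (F : T -> {mpoly K[n]}) :
  Lam B P (\sum_(x <- s) F x) = \sum_(x <- s) Lam B P (F x).
Proof.
elim: s => [|x s IH]; first by rewrite !big_nil Lam0.
by rewrite !big_cons Lam_add IH.
Qed.

Lemma Lam_X (K : fieldType) n B (P : pred 'X_{1..n}) N :
  (forall N', P N' -> forall k, N' k <= B)%N ->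
  Lam B P ('X_[N] : {mpoly K[n]}) = (P N)%:R.
Proof.
move=> hbox; rewrite /Lam; case: (boolP (P N)) => hN.
  have hNb := hbox _ hN.
  rewrite (bigD1 [ffun k => (inord (N k) : 'I_B.+1)]) /=; last by rewrite mkm_of.
  rewrite mkm_of // mcoeffX eqxx big1 ?addr0 // => f /andP[_ hf].
  rewrite mcoeffX; case: eqP => // hNf; move: hf; rewrite -(mkm_of hNb) in hNf.
  by move/mkm_inj: hNf => ->; rewrite eqxx.
rewrite big1 // => f hf; rewrite mcoeffX; case: eqP => // hNf.
by move: hN; rewrite hNf hf.
Qed.

Lemma Lam_mulX (K : fieldType) n B (P : pred 'X_{1..n}) (p : {mpoly K[n]}) A :
  (forall N', P N' -> forall k, N' k <= B)%N ->
  Lam B P (p * 'X_[A]) = \sum_(t <- msupp p) p@_t * (P (t + A)%MM)%:R.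
Proof.
move=> hbox; rewrite {1}(mpolyE p) mulr_suml Lam_sum; apply: eq_bigr => t _.
by rewrite -scalerAl -mpolyXD Lam_scale Lam_X.
Qed.

Lemma Lam_binom (K : fieldType) n B (P : pred 'X_{1..n}) (p : {mpoly K[n]}) A A' :
  (forall N', P N' -> forall k, N' k <= B)%N ->
  (forall t, P (t + A)%MM = P (t + A')%MM) ->
  Lam B P (p * ('X_[A] - 'X_[A'])) = 0.
Proof.
move=> hbox hP; rewrite mulrBr Lam_add Lam_opp !Lam_mulX //.
by apply/eqP; rewrite subr_eq0; apply/eqP; apply: eq_bigr => t _; rewrite hP.
Qed.

Lemma Lam_top (K : fieldType) m B (P : pred 'X_{1..nS m}) (g : {mpoly K[nS m]}) M :
  (forall N', P N' -> forall k, N' k <= B)%N ->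
  P M -> (forall N, P N -> N != M -> mlt_tau M N) -> lm g = M ->
  Lam B P g = g@_M.
Proof.
move=> hbox hM hup hlm; have hMb := hbox _ hM.
rewrite /Lam (bigD1 [ffun k => (inord (M k) : 'I_B.+1)]) /=; last by rewrite mkm_of.
rewrite mkm_of // big1 ?addr0 // => f /andP[hf hne].
have hfM : mkm f != M.
  apply: contra hne => /eqP hfM; apply/eqP; apply: mkm_inj; rewrite mkm_of //.
have := hup _ hf hfM; rewrite -hlm => hlt.
apply/eqP; rewrite mcoeff_eq0; apply/negP => hs.
by have := lm_max hs; rewrite hlt.
Qed.

Definition Kp m (a b : 'I_m -> nat) (M : 'X_{1..nS m}) : pred 'X_{1..nS m} :=
  fun N => [&& [forall i, psiT a b N i == psiT a b M i], zdeg N == zdeg M &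
              (M (widx m) < N (widx m))%N || (N == M)].

Definition Bd m (a b : 'I_m -> nat) (M : 'X_{1..nS m}) :=
  (zdeg M + \sum_(i < m) psiT a b M i)%N.

Lemma Kp_box m (a b : 'I_m -> nat) M N : Kp a b M N -> forall k, (N k <= Bd a b M)%N.
Proof.
case/and3P => /forallP hpsi /eqP hz _ k.
have hx : forall i, (N (xidx i) <= zdeg N)%N.
  move=> i; rewrite /zdeg (bigD1 i) //=; lia.
have hw : (N (widx m) <= zdeg N)%N by rewrite /zdeg; lia.
case: (idx_cases k) => [[i ->]|[[i ->]|->]]; rewrite /Bd -hz.
- have h1 : (N (tidx i) <= psiT a b N i)%N by rewrite /psiT; lia.
  have h2 : (psiT a b M i <= \sum_(j < m) psiT a b M j)%N by rewrite (bigD1 i) //=; lia.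
  rewrite (eqP (hpsi i)) in h1; lia.
- have := hx i; lia.
- lia.
Qed.

Lemma sum_le_eq m (f g : 'I_m -> nat) :
  (forall i, f i <= g i)%N -> (\sum_i f i = \sum_i g i)%N -> forall i, f i = g i.
Proof.
move=> hle hs i; apply/eqP; rewrite eqn_leq hle /= leqNgt; apply/negP => hlt.
move: hs; rewrite (bigD1 i) //= [in RHS](bigD1 i) //=.
set SF := (X in (f i + X)%N = _); set SG := (X in _ = (g i + X)%N) => hs.
have : (SF <= SG)%N by rewrite /SF /SG; apply: leq_sum.
lia.
Qed.

Lemma exists_sub m (q : 'I_m -> nat) r : (r <= \sum_i q i)%N ->
  exists c : {ffun 'I_m -> nat}, (forall i, c i <= q i)%N /\ cabs c = r.
Proof.
elim: r => [|r IH] h.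
  exists [ffun=> 0%N]; split => [i|]; first by rewrite ffunE.
  by rewrite /cabs big1 // => i _; rewrite ffunE.
have [c [hc hcr]] := IH (ltnW h).
case: (pickP (fun i => c i < q i)%N) => [i hi|hnone].
  exists [ffun j => (c j + (j == i))%N]; split.
    move=> j; rewrite ffunE; case: (eqVneq j i) => [->|_]; rewrite ?addn1 ?addn0 //.
  rewrite /cabs; under eq_bigr do rewrite ffunE.
  rewrite big_split /= -/(cabs c) hcr (bigD1 i) //= eqxx big1 ?addn0 ?addn1 //.
  by move=> j /negbTE ->.
have : (\sum_i q i <= \sum_i c i)%N.
  by apply: leq_sum => i _; have := hnone i; rewrite /= ltnNge => /negbFE.
rewrite -/(cabs c) hcr; lia.
Qed.

Lemma band m (a b : 'I_m -> nat) (M : 'X_{1..nS m}) k :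
  (forall l, M (tidx l) + b l < a l)%N ->
  (forall c : {ffun 'I_m -> nat}, (2 <= cabs c)%N -> (cabs c < k)%N ->
       (cabs c <= M (widx m))%N -> exists i, (M (tidx i) < gam a b c i)%N) ->
  forall N, (forall i, psiT a b N i = psiT a b M i) -> zdeg N = zdeg M ->
  (M (widx m) < N (widx m) + k)%N -> (N (widx m) <= M (widx m))%N -> N = M.
Proof.
move=> hrho hc N hpsi hz hk hle.
set eps := M (widx m); set eta := N (widx m).
have hpsi' : forall i, (N (tidx i) + a i * N (xidx i) + b i * eta =
                        M (tidx i) + a i * M (xidx i) + b i * eps)%N.
  by move=> i; have := hpsi i; rewrite /psiT.
have hz' : (\sum_(i < m) N (xidx i) + eta = \sum_(i < m) M (xidx i) + eps)%N by exact: hz.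
case: (eqVneq eta eps) => [heq|hne].
  have hd : forall i, (N (xidx i) <= M (xidx i))%N.
    move=> i; rewrite leqNgt; apply/negP => hlt.
    have h1 : (a i * M (xidx i) + a i <= a i * N (xidx i))%N.
      by nia.
    have := hpsi' i; have := hrho i; rewrite heq; lia.
  have hs : (\sum_(i < m) N (xidx i) = \sum_(i < m) M (xidx i))%N by lia.
  have hd2 := sum_le_eq hd hs.
  apply: mnm_eq3 => // i.
  by have := hpsi' i; rewrite heq hd2; lia.
have hlt : (eta < eps)%N by rewrite ltn_neqAle hne.
set r := (eps - eta)%N.
have hr : (r <= \sum_(i < m) (N (xidx i) - M (xidx i)))%N.
  have : (\sum_(i < m) N (xidx i) <= \sum_(i < m) ((N (xidx i) - M (xidx i)) + M (xidx i)))%N.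
    by apply: leq_sum => i _; rewrite addnC -leq_subLR.
  rewrite big_split /= /r => H; move: hz' H hlt.
  set SN := (\sum_(i < m) N (xidx i))%N; set SM := (\sum_(i < m) M (xidx i))%N.
  set SQ := (\sum_(i < m) (N (xidx i) - M (xidx i)))%N; lia.
have [c [hcq hcr]] := exists_sub hr.
have hg : forall i, (gam a b c i <= M (tidx i))%N.
  move=> i; rewrite /gam hcr.
  case: (posnP (c i)) => [->|hci]; first by rewrite muln0 sub0n.
  have h1 : (a i * c i <= a i * (N (xidx i) - M (xidx i)))%N by rewrite leq_mul2l hcq orbT.
  rewrite mulnBr in h1.
  have e : eps = (eta + r)%N by rewrite /r; lia.
  have := hpsi' i; rewrite e mulnDr; lia.
case: (ltnP r 2) => hr2.
  have hr1 : r = 1%N by rewrite /r; lia.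
  case: (pickP (fun i => 0 < c i)%N) => [l hl|hnone]; last first.
    move: hcr; rewrite /cabs big1 ?hr1 // => i _.
    by have := hnone i; rewrite /= lt0n => /negbFE/eqP.
  have := hg l; have := hrho l; rewrite /gam hcr hr1 muln1.
  have : (a l <= a l * c l)%N by rewrite leq_pmulr.
  lia.
have h2c : (1 < cabs c)%N by rewrite hcr.
have h3c : (cabs c < k)%N by rewrite hcr /r; lia.
have h4c : (cabs c <= M (widx m))%N by rewrite hcr /r; lia.
have [i hi] := hc c h2c h3c h4c.
by have := hg i; rewrite leqNgt hi.
Qed.

Lemma Kp_closed1 m (a b : 'I_m -> nat) (M : 'X_{1..nS m}) k (A B : 'X_{1..nS m}) :
  (forall N, (forall i, psiT a b N i = psiT a b M i) -> zdeg N = zdeg M ->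
     (M (widx m) < N (widx m) + k)%N -> (N (widx m) <= M (widx m))%N -> N = M) ->
  (1 <= k)%N ->
  (forall i, psiT a b A i = psiT a b B i) -> zdeg A = zdeg B ->
  (A (widx m) <= B (widx m) + k)%N ->
  ((B (widx m) < A (widx m))%N -> ~~ (A <= M)%MM) ->
  forall t, Kp a b M (t + A)%MM -> Kp a b M (t + B)%MM.
Proof.
move=> hband hk hpsi hz hAB hor t /and3P[/forallP hp /eqP hzz hw].
have hp' : forall i, psiT a b (t + B)%MM i = psiT a b M i.
  by move=> i; rewrite psiT_add -hpsi -psiT_add (eqP (hp i)).
have hz' : zdeg (t + B)%MM = zdeg M by rewrite zdeg_add -hz -zdeg_add.
apply/and3P; split; first by apply/forallP => i; rewrite hp'.
  by rewrite hz'.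
apply/orP; case: (ltnP (M (widx m)) ((t + B)%MM (widx m))) => hle; first by left.
right; apply/eqP; apply: hband => //.
case/orP: hw => [hw|/eqP hw].
  move: hw; rewrite !mnmDE; lia.
case: (ltnP (B (widx m)) (A (widx m))) => hBA.
  by have := hor hBA; rewrite -hw lem_addl.
move: hle; rewrite -hw !mnmDE; lia.
Qed.

Lemma Kp_closed m (a b : 'I_m -> nat) (M : 'X_{1..nS m}) k (A B : 'X_{1..nS m}) :
  (forall N, (forall i, psiT a b N i = psiT a b M i) -> zdeg N = zdeg M ->
     (M (widx m) < N (widx m) + k)%N -> (N (widx m) <= M (widx m))%N -> N = M) ->
  (1 <= k)%N ->
  (forall i, psiT a b A i = psiT a b B i) -> zdeg A = zdeg B ->
  (A (widx m) <= B (widx m) + k)%N -> (B (widx m) <= A (widx m) + k)%N ->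
  ((B (widx m) < A (widx m))%N -> ~~ (A <= M)%MM) ->
  ((A (widx m) < B (widx m))%N -> ~~ (B <= M)%MM) ->
  forall t, Kp a b M (t + A)%MM = Kp a b M (t + B)%MM.
Proof.
move=> hband hk hpsi hz h1 h2 h3 h4 t; apply/idP/idP.
  exact: Kp_closed1 hband hk hpsi hz h1 h3 t.
by apply: Kp_closed1 hband hk _ _ h2 h4 t => //.
Qed.

Lemma ideal_gen_add (K : fieldType) m (G : {mpoly K[nS m]} -> Prop) f1 f2 :
  ideal_gen G f1 -> ideal_gen G f2 -> ideal_gen G (f1 + f2).
Proof.
move=> [s1 [h1 ->]] [s2 [h2 ->]]; exists (s1 ++ s2); split; last by rewrite big_cat.
by move=> p; rewrite mem_cat => /orP[/h1|/h2].
Qed.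

Lemma ideal_gen_mull (K : fieldType) m (G : {mpoly K[nS m]} -> Prop) p f :
  ideal_gen G f -> ideal_gen G (p * f).
Proof.
move=> [s [h ->]]; exists [seq (p * q.1, q.2) | q <- s]; split.
  by move=> q /mapP [q' hq' ->]; exact: (h q' hq').
by rewrite big_map mulr_sumr; apply: eq_bigr => q _; rewrite mulrA.
Qed.

Lemma ideal_gen_gen (K : fieldType) m (G : {mpoly K[nS m]} -> Prop) p f :
  G f -> ideal_gen G (p * f).
Proof.
by move=> hf; exists [:: (p, f)]; split; [move=> q; rewrite inE => /eqP ->|rewrite big_seq1].
Qed.

Lemma ideal_gen_sum (K : fieldType) m (G : {mpoly K[nS m]} -> Prop) (T : Type) (s : seq T) F :
  (forall x, ideal_gen G (F x)) -> ideal_gen G (\sum_(x <- s) F x).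
Proof.
move=> h; elim: s => [|x s IH]; last by rewrite big_cons; apply: ideal_gen_add.
by rewrite big_nil; exists [::]; split => //; rewrite big_nil.
Qed.

Lemma ideal_gen_incl (K : fieldType) m (G : {mpoly K[nS m]} -> Prop) (I : {mpoly K[nS m]} -> Prop) :
  (forall f, G f -> I f) -> I 0 -> (forall f1 f2, I f1 -> I f2 -> I (f1 + f2)) ->
  (forall p f, I f -> I (p * f)) -> forall f, ideal_gen G f -> I f.
Proof.
move=> hG h0 hD hM f [s [hs ->]]; elim: s hs => [|q s IH] hs; first by rewrite big_nil.
rewrite big_cons; apply: hD; first by apply: hM; apply: hG; apply: hs; rewrite inE eqxx.
by apply: IH => p hp; apply: hs; rewrite inE hp orbT.
Qed.

Lemma init_supp (K : fieldType) m (I : {mpoly K[nS m]} -> Prop) F N :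
  init_ideal I F -> N \in msupp F -> exists g, [/\ I g, g != 0 & (lm g <= N)%MM].
Proof.
move=> [s [hs ->]] /msupp_sum_le /flattenP [l /mapP [q]].
rewrite filter_predT => hq -> hN.
have [g [hg [hg0 hq2]]] := hs q hq.
exists g; split => //; move: hN; rewrite hq2 (perm_mem (msuppMX _ _)).
by case/mapP => t _ ->; apply: lem_addr.
Qed.

Lemma reesL_ideal (K : fieldType) m (a b : 'I_m -> nat) (G : {mpoly K[nS m]} -> Prop) :
  (forall f, G f -> reesL a b f) -> forall f, ideal_gen G f -> reesL a b f.
Proof.
move=> hG; apply: ideal_gen_incl => //.
- by rewrite /reesL mmap0.
- by move=> f1 f2 h1 h2; rewrite /reesL mmapD; rewrite /reesL in h1 h2; rewrite h1 h2 addr0.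
- move=> p f h; rewrite /reesL in h *.
  by rewrite (mmap_is_multiplicative (reesImg K a b) (@mpolyC m.+1 K)).1 h mulr0.
Qed.

Lemma binom_lmB (K : fieldType) m (A B : 'X_{1..nS m}) :
  mlt_tau A B -> lm ('X_[A] - 'X_[B] : {mpoly K[nS m]}) = B.
Proof.
move=> h; have hAB : A != B by apply: contraTneq h => ->; rewrite mlt_irr.
apply: lm_unique.
  rewrite mcoeff_msupp binom_coef eqxx (negbTE hAB) sub0r oppr_eq0.
  exact: oner_neq0.
by move=> N /binom_supp [->|->]; rewrite ?eqxx // => _.
Qed.

Lemma binom_lm_W (K : fieldType) m (A B : 'X_{1..nS m}) :
  ((B (widx m) < A (widx m))%N -> lm ('X_[A] - 'X_[B] : {mpoly K[nS m]}) = A) /\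
  ((A (widx m) < B (widx m))%N -> lm ('X_[A] - 'X_[B] : {mpoly K[nS m]}) = B).
Proof. by split => h; [apply: binom_lm | apply: binom_lmB]; apply: mlt_W. Qed.

Lemma TM_ge m (e : 'I_m -> nat) (k : 'I_(nS m)) : (m <= k)%N -> TM e k = 0%N.
Proof.
move=> hk; rewrite /Defs.tmono mnmE; case: insubP => [j /= hj _|//].
by move: hk; rewrite leqNgt hj.
Qed.

Lemma xw_at m (i l : nat) : (i <= m)%N -> (l <= m)%N ->
  xw m i (inord (m + l)) = (i == l) :> nat.
Proof.
move=> hi hl; rewrite /xw U_eval; congr nat_of_bool.
apply/eqP/eqP => [/(congr1 (@nat_of_ord _))|->//].
rewrite !inordK /nS; lia.
Qed.

Lemma xw_w m (i : nat) : (i <= m)%N -> xw m i (widx m) = (i == m) :> nat.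
Proof. by move=> hi; apply: xw_at. Qed.

Definition GenJ (K : fieldType) m (a b : 'I_m -> nat) (C : seq {ffun 'I_m -> nat}) j
  (f : {mpoly K[nS m]}) : Prop :=
  Gamma0 a b f \/ exists i, (i < j)%N /\ f = Pc K a b (nth [ffun=> 0%N] C i).

Lemma HjE (K : fieldType) m (a b : 'I_m -> nat) C j :
  Hj (K := K) a b C j = ideal_gen (GenJ a b C j).
Proof. by []. Qed.

Lemma zdeg_xw m (i : nat) : (i <= m)%N -> zdeg (xw m i) = 1%N.
Proof.
rewrite leq_eqVlt => /orP[/eqP ->|hi]; first exact: zdeg_xwW.
by have -> : xw m i = xw m (Ordinal hi) by []; rewrite zdeg_xwX.
Qed.

Lemma Gamma0_data (K : fieldType) m (a b : 'I_m -> nat) h :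
  Gamma0 (K := K) a b h -> exists i l, (l < i <= m)%N /\ [/\
    h = 'X_[PA a b (xw m i) (xw m l)] - 'X_[PB a b (xw m i) (xw m l)],
    PA a b (xw m i) (xw m l) != PB a b (xw m i) (xw m l),
    (forall t, psiT a b (PA a b (xw m i) (xw m l)) t = psiT a b (PB a b (xw m i) (xw m l)) t),
    zdeg (PA a b (xw m i) (xw m l)) = zdeg (PB a b (xw m i) (xw m l)) &
    ((PA a b (xw m i) (xw m l)) (widx m) <= 1)%N && ((PB a b (xw m i) (xw m l)) (widx m) <= 1)%N].
Proof.
move=> [i [l [/andP[hli him] ->]]]; exists i, l; split; first by rewrite hli him.
split => //.
- apply/eqP => /(congr1 (fun M : 'X_{1..nS m} => M (inord (m + i)))).
  rewrite /PA /PB !mnmDE !TM_ge; last 2 first.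
    by rewrite inordK /nS; lia.
    by rewrite inordK /nS; lia.
  rewrite !xw_at //; last by lia.
  by rewrite eqxx; case: eqP => // hh; move: hli; rewrite hh ltnn.
- exact: psiT_PAB.
- by rewrite zdeg_PA zdeg_PB !zdeg_xw //; lia.
- rewrite PA_w PB_w !xw_w //; last by lia.
  by case: (i == m); case: (l == m).
Qed.

Lemma Pc_data (K : fieldType) m (a b : 'I_m -> nat) c :
  let A := PA a b (U_(widx m) *+ cabs c)%MM (xmono c) in
  let B := PB a b (U_(widx m) *+ cabs c)%MM (xmono c) in
  [/\ Pc K a b c = 'X_[A] - 'X_[B],
    (forall t, psiT a b A t = psiT a b B t),
    zdeg A = zdeg B, A (widx m) = cabs c & B (widx m) = 0%N].
Proof.
split => //.
- exact: psiT_PAB.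
- by rewrite zdeg_PA zdeg_PB zdeg_UW zdeg_XM.
- exact: PA_Pc_w.
- exact: PB_Pc_w.
Qed.

Lemma GenJ_data (K : fieldType) m (a b : 'I_m -> nat) C j k (h : {mpoly K[nS m]}) :
  (1 <= k)%N -> (forall i, (i < j)%N -> 1 <= cabs (nth [ffun=> 0%N] C i) <= k)%N ->
  GenJ a b C j h -> exists A B, [/\ h = 'X_[A] - 'X_[B], A != B,
    (forall t, psiT a b A t = psiT a b B t), zdeg A = zdeg B &
    (A (widx m) <= B (widx m) + k)%N && (B (widx m) <= A (widx m) + k)%N].
Proof.
move=> hk hC [/Gamma0_data [i [l [_ [-> hne hp hz /andP[h1 h2]]]]]|[i [hi ->]]].
  by do 2 eexists; split; eauto; apply/andP; split; lia.
have [-> hp hz hA hB] := Pc_data K a b (nth [ffun=> 0%N] C i).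
have /andP[hc1 hc2] := hC i hi.
do 2 eexists; split; eauto.
  by apply: neq_by_w; rewrite hA hB -lt0n.
by rewrite hA hB; apply/andP; split; lia.
Qed.

Lemma Kp_self m (a b : 'I_m -> nat) M : Kp a b M M.
Proof. by apply/and3P; split; [apply/forallP => i|rewrite eqxx|rewrite eqxx orbT]. Qed.

Lemma Kp_up m (a b : 'I_m -> nat) M N : Kp a b M N -> N != M -> mlt_tau M N.
Proof.
case/and3P => _ _ /orP[h _|/eqP -> ]; first exact: mlt_W.
by rewrite eqxx.
Qed.

Lemma L2 (K : fieldType) m (a b : 'I_m -> nat) (C : seq {ffun 'I_m -> nat}) j k :
  groebner (fun f => Gamma0 a b f \/ exists2 c, c \in C & f = Pc K a b c) (reesL a b) ->
  (forall c, c \in C -> 2 <= cabs c)%N ->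
  (forall i, i < j -> nth [ffun=> 0%N] C i \in C)%N ->
  (forall i, i < j -> cabs (nth [ffun=> 0%N] C i) <= k)%N ->
  (forall c : {ffun 'I_m -> nat}, 2 <= cabs c -> cabs c < k ->
      exists i, i < j /\ c = nth [ffun=> 0%N] C i)%N ->
  (1 <= k)%N ->
  forall g, Hj (K := K) a b C j g -> g != 0 ->
  exists h : {mpoly K[nS m]}, [/\ GenJ a b C j h, h != 0 & (lm h <= lm g)%MM].
Proof.
move=> [hGL hGB] hC2 hCin hCk hclos hk g hg hg0.
have hC1 : forall i, (i < j)%N -> (1 <= cabs (nth [ffun=> 0%N] C i) <= k)%N.
  by move=> i hi; rewrite hCk // andbT; have := hC2 _ (hCin i hi); lia.
have hGnz : forall h : {mpoly K[nS m]}, GenJ a b C j h -> h != 0.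
  move=> h hG; have [A [B [-> hne _ _ _]]] := GenJ_data hk hC1 hG.
  exact: binom_neq0.
set M := lm g.
case: (classic (exists h : {mpoly K[nS m]}, GenJ a b C j h /\ (lm h <= M)%MM)) => [[h [hh hle]]|hno].
  by exists h; split => //; apply: hGnz.
have H : forall h : {mpoly K[nS m]}, GenJ a b C j h -> ~~ (lm h <= M)%MM.
  by move=> h hh; apply/negP => hle; apply: hno; exists h.
exfalso.
have lmPc : forall c, (1 <= cabs c)%N ->
    lm (Pc K a b c) = PA a b (U_(widx m) *+ cabs c)%MM (xmono c).
  move=> c hc; have [-> _ _ hA hB] := Pc_data K a b c.
  by apply: (binom_lm_W K _ _).1; rewrite hA hB.
case: (posnP (M (widx m))) => hw.
  have hgL : reesL a b g.
    apply: (reesL_ideal _ hg) => f [hf|[i [hi ->]]]; apply: hGL; first by left.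
    by right; exists (nth [ffun=> 0%N] C i) => //; apply: hCin.
  have hinit : init_ideal (reesL a b) ('X_[M] : {mpoly K[nS m]}).
    exists [:: (1, 'X_[M])]; split; last by rewrite big_seq1 mul1r.
    by move=> q; rewrite inE => /eqP -> /=; exists g.
  have hMs : M \in msupp ('X_[M] : {mpoly K[nS m]}) by rewrite msuppX mem_head.
  have [g' [hg' hg'0 hle]] := init_supp ((hGB _).1 hinit) hMs.
  case: hg' => [h0|[c hc hc']].
    by have := H g' (or_introl h0); rewrite hle.
  have hc2 := hC2 c hc.
  move: hle; rewrite hc' lmPc; last by lia.
  move/mnm_lepP => /(_ (widx m)); rewrite PA_Pc_w hw; lia.
have hrho : forall l : 'I_m, (M (tidx l) + b l < a l)%N.
  move=> l; have hG : GenJ a b C j (Ppol K a b (xw m m) (xw m l)).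
    by left; exists m, l; rewrite ltn_ord leqnn.
  have := H _ hG; rewrite PpolE (binom_lm_W K _ _).1; last first.
    by rewrite PA_Wmove_w PB_Wmove_w.
  rewrite ltnNge; apply: contra => hcon; apply: lem3 => [i|i|].
  - rewrite PA_Wmove_t; case: eqP => [->|_] //; lia.
  - by rewrite PA_Wmove_x.
  - by rewrite PA_Wmove_w.
have hcc : forall c : {ffun 'I_m -> nat}, (2 <= cabs c)%N -> (cabs c < k)%N ->
    (cabs c <= M (widx m))%N -> exists i, (M (tidx i) < gam a b c i)%N.
  move=> c h2 h3 h4; have [i0 [hi0 hci0]] := hclos c h2 h3.
  have hG : GenJ a b C j (Pc K a b c) by right; exists i0; rewrite hci0.
  have := H _ hG; rewrite lmPc; last by lia.
  case: (pickP (fun i => M (tidx i) < gam a b c i)%N) => [i hi|hnone]; first by exists i.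
  move/negP => []; apply: lem3 => [i|i|].
  - by rewrite PA_Pc_t leqNgt; have := hnone i => /= ->.
  - by rewrite PA_Pc_x.
  - by rewrite PA_Pc_w.
have hband := band hrho hcc.
have hbox := @Kp_box m a b M.
have hL0 : Lam (Bd a b M) (Kp a b M) g = 0.
  case: hg => s [hs ->]; rewrite Lam_sum big_seq big1 // => q hq.
  have hGq := hs q hq.
  have [A [B [hq2 hne hp hz /andP[h1 h2]]]] := GenJ_data hk hC1 hGq.
  rewrite hq2; apply: Lam_binom => //.
  apply: Kp_closed hband hk hp hz h1 h2 _ _ => hlt.
    by have := H _ hGq; rewrite hq2 (binom_lm_W K _ _).1.
  by have := H _ hGq; rewrite hq2 (binom_lm_W K _ _).2.
have hLM : Lam (Bd a b M) (Kp a b M) g = g@_M.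
  apply: Lam_top hbox (Kp_self a b M) _ _ => //.
  exact: Kp_up.
by move: (lm_supp hg0); rewrite mcoeff_msupp -/M -hLM hL0 eqxx.
Qed.

Lemma xw_t m (i : nat) (p : 'I_m) : (i <= m)%N -> xw m i (tidx p) = 0%N.
Proof.
move=> hi; rewrite /xw U_eval; apply/eqP; rewrite eqb0; apply/eqP.
move=> /(congr1 (@nat_of_ord _)); rewrite tidxE inordK /nS; have := ltn_ord p; lia.
Qed.

Definition NT m (N : 'X_{1..nS m}) : 'X_{1..nS m} := TM (fun i => N (tidx i)).

Lemma L3 (K : fieldType) m (a b : 'I_m -> nat) (C : seq {ffun 'I_m -> nat}) j k
   (u N : 'X_{1..nS m}) (h : {mpoly K[nS m]}) :
  (1 <= k)%N -> (forall i, (i < j)%N -> 1 <= cabs (nth [ffun=> 0%N] C i) <= k)%N ->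
  (forall i, u (xidx i) = 0%N) -> u (widx m) = k ->
  GenJ a b C j h -> (lm h <= u + N)%MM ->
  exists h' : {mpoly K[nS m]}, [/\ GenJ a b C j h', h' != 0 & (lm h' <= NT N + u)%MM].
Proof.
move=> hk hC1 hux huw hG hle.
have tr : forall L : 'X_{1..nS m}, (L <= u + N)%MM -> (forall i, L (xidx i) = 0%N) ->
    (L (widx m) <= k)%N -> (L <= NT N + u)%MM.
  move=> L /mnm_lepP hL hx hw; apply: lem3 => [i|i|].
  - by have := hL (tidx i); rewrite !mnmDE /NT TM_t addnC.
  - by rewrite hx.
  - by rewrite mnmDE /NT TM_w huw.
have hW : forall p : 'I_m, (a p <= (u + N)%MM (tidx p))%N ->
    exists h' : {mpoly K[nS m]}, [/\ GenJ a b C j h', h' != 0 & (lm h' <= NT N + u)%MM].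
  move=> p hp; exists (Ppol K a b (xw m m) (xw m p)); split.
  - by left; exists m, p; rewrite ltn_ord leqnn.
  - by rewrite PpolE; apply: binom_neq0; apply: neq_by_w; rewrite PA_Wmove_w PB_Wmove_w.
  rewrite PpolE (binom_lm_W K _ _).1; last by rewrite PA_Wmove_w PB_Wmove_w.
  apply: tr => [|i|]; last by rewrite PA_Wmove_w.
  - apply: lem3 => [i|i|].
    + rewrite PA_Wmove_t; case: eqP => [->|_] //; lia.
    + by rewrite PA_Wmove_x.
    + by rewrite PA_Wmove_w mnmDE huw; lia.
  - by rewrite PA_Wmove_x.
have lmPc : forall c, (1 <= cabs c)%N ->
    lm (Pc K a b c) = PA a b (U_(widx m) *+ cabs c)%MM (xmono c).
  move=> c hc; have [-> _ _ hA hB] := Pc_data K a b c.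
  by apply: (binom_lm_W K _ _).1; rewrite hA hB.
case: hG => [hG0|[i0 [hi0 hPc]]]; last first.
  have /andP[hc1 hc2] := hC1 i0 hi0.
  exists h; split; first by right; exists i0.
    by rewrite hPc PcE; apply: binom_neq0; apply: neq_by_w; rewrite PA_Pc_w PB_Pc_w -lt0n.
  move: hle; rewrite hPc lmPc // => hle; apply: tr => // [i|]; first by rewrite PA_Pc_x.
  by rewrite PA_Pc_w.
have [i [l [/andP[hli him] [hh hne _ _ _]]]] := Gamma0_data hG0.
have hl : (l < m)%N by lia.
rewrite (_ : xw m l = xw m (Ordinal hl)) // in hh.
case: (eqVneq i m) => [him'|him'].
  subst i; exists h; split => //.
    by left.
    by rewrite hh; apply: binom_neq0; apply: neq_by_w; rewrite PA_Wmove_w PB_Wmove_w.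
  move: hle; rewrite hh (binom_lm_W K _ _).1; last by rewrite PA_Wmove_w PB_Wmove_w.
  move=> hle; apply: tr => // [i|]; first by rewrite PA_Wmove_x.
  by rewrite PA_Wmove_w.
have hi : (i < m)%N by lia.
rewrite (_ : xw m i = xw m (Ordinal hi)) // in hh hne.
have hil : (Ordinal hi != Ordinal hl) by apply/eqP => -[]; lia.
have hh0 : h != 0 by rewrite hh; apply: binom_neq0.
move/mnm_lepP: hle; rewrite hh => hle.
have := lm_supp hh0; rewrite hh => /binom_supp [hL|hL]; rewrite hL in hle.
  apply: (hW (Ordinal hl)); have := hle (tidx (Ordinal hl)).
  rewrite PA_t !psiT_xwX (negbTE hil) eqxx muln0 muln1 /minn /= xw_t; last by lia.
  by case: ifP => [_|/negbT]; rewrite ?subn0 ?addn0 // -eqn0Ngt => /eqP ->.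
apply: (hW (Ordinal hi)); have := hle (tidx (Ordinal hi)).
rewrite PB_t !psiT_xwX eqxx eq_sym (negbTE hil) muln0 muln1 xw_t; last exact: ltnW hl.
by rewrite addn0 /minn ltn0 subn0.
Qed.

Lemma ideal_gen_self (K : fieldType) m (G : {mpoly K[nS m]} -> Prop) f :
  G f -> ideal_gen G f.
Proof. by move=> hf; rewrite -[f]mul1r; apply: ideal_gen_gen. Qed.

Lemma NT_le m (N : 'X_{1..nS m}) : (NT N <= N)%MM.
Proof. by apply: lem3 => [i|i|]; rewrite /NT ?TM_t ?TM_x ?TM_w. Qed.

Theorem proposition3p2 (K : fieldType) (m : nat) (a b : 'I_m -> nat)
  (C : seq {ffun 'I_m -> nat}) :
  (3 <= m)%N ->
  (forall i, (b i < a i)%N) ->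
  (exists i1 i2 : 'I_m, [/\ i1 != i2, b i1 != 0%N & b i2 != 0%N]) ->
  (forall c, c \in C -> (2 <= cabs c)%N) ->
  sorted (@tault m) C ->
  (forall c c', c \in C -> (2 <= cabs c')%N -> tault c' c -> c' \in C) ->
  groebner (fun f => Gamma0 a b f \/ exists2 c, c \in C & f = Pc K a b c)
           (reesL a b) ->
  forall j : nat, (1 <= j <= size C)%N ->
    let J := colon (K:=K) (init_ideal (Hj a b C j.-1))
                   'X_[lm (Pc K a b (nth [ffun=> 0%N] C j.-1))] in
    forall f, J f <-> extended J f.
Proof.
move=> hm hba hb2 hC2 hsort hclos hgb j /andP[hj1 hjs] J f.
have hj0 : (j.-1 < size C)%N by lia.
have hcjC : nth [ffun=> 0%N] C j.-1 \in C by apply: mem_nth.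
have hk2 := hC2 _ hcjC.
have hk : (1 <= cabs (nth [ffun=> 0%N] C j.-1))%N by lia.
have hR : sorted (fun x y : {ffun 'I_m -> nat} => (cabs x <= cabs y)%N) C.
  apply: sub_sorted hsort => x y; rewrite /tault => /orP[/ltnW //|/andP[/eqP -> _]] //.
have hRnth : forall i i', (i <= i')%N -> (i' < size C)%N ->
    (cabs (nth [ffun=> 0%N] C i) <= cabs (nth [ffun=> 0%N] C i'))%N.
  move=> i i' hii' hi'.
  have htr : transitive (fun x y : {ffun 'I_m -> nat} => (cabs x <= cabs y)%N).
    by move=> y x z; exact: leq_trans.
  have hrf : reflexive (fun x y : {ffun 'I_m -> nat} => (cabs x <= cabs y)%N).
    by move=> x; exact: leqnn.
  apply: (sorted_leq_nth htr hrf [ffun=> 0%N] hR) => //.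
  by rewrite inE; apply: leq_ltn_trans hi'.
have hCin : forall i, (i < j.-1)%N -> nth [ffun=> 0%N] C i \in C.
  by move=> i hi; apply: mem_nth; apply: ltn_trans hi hj0.
have hCk : forall i, (i < j.-1)%N ->
    (cabs (nth [ffun=> 0%N] C i) <= cabs (nth [ffun=> 0%N] C j.-1))%N.
  by move=> i hi; apply: hRnth => //; apply: ltnW.
have hC1 : forall i, (i < j.-1)%N ->
    (1 <= cabs (nth [ffun=> 0%N] C i) <= cabs (nth [ffun=> 0%N] C j.-1))%N.
  by move=> i hi; rewrite hCk // andbT; have := hC2 _ (hCin i hi); lia.
have hcl : forall c : {ffun 'I_m -> nat}, (2 <= cabs c)%N ->
    (cabs c < cabs (nth [ffun=> 0%N] C j.-1))%N ->
    exists i, (i < j.-1)%N /\ c = nth [ffun=> 0%N] C i.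
  move=> c h2 h3.
  have hcC : c \in C by apply: (hclos _ c hcjC h2); rewrite /tault h3.
  exists (index c C); split; last by rewrite nth_index.
  rewrite ltnNge; apply/negP => hle.
  have := hRnth _ _ hle; rewrite index_mem nth_index // => /(_ hcC); lia.
have [hPc _ _ hA hB] := Pc_data K a b (nth [ffun=> 0%N] C j.-1).
have hu : lm (Pc K a b (nth [ffun=> 0%N] C j.-1)) =
    PA a b (U_(widx m) *+ cabs (nth [ffun=> 0%N] C j.-1))%MM (xmono (nth [ffun=> 0%N] C j.-1)).
  by rewrite hPc; apply: (binom_lm_W K _ _).1; rewrite hA hB; lia.
have hux : forall i, lm (Pc K a b (nth [ffun=> 0%N] C j.-1)) (xidx i) = 0%N.
  by move=> i; rewrite hu PA_Pc_x.
have huw : lm (Pc K a b (nth [ffun=> 0%N] C j.-1)) (widx m) = cabs (nth [ffun=> 0%N] C j.-1).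
  by rewrite hu PA_Pc_w.
set u := lm (Pc K a b (nth [ffun=> 0%N] C j.-1)) in hux huw.
split.
  move=> hJ; rewrite /J /colon -/u in hJ; rewrite (mpolyE f).
  exists [seq (f@_N *: 'X_[(N - NT N)%MM], 'X_[NT N]) | N <- msupp f]; split.
    move=> q /mapP [N hN ->] /=; split; last first.
      by move=> M'; rewrite msuppX inE => /eqP -> k' hk'; rewrite /NT TM_ge.
    rewrite /J /colon -/u.
    have hNu : (u + N)%MM \in msupp (f * 'X_[u]) by rewrite mcoeff_msupp mcoeffMX -mcoeff_msupp.
    have [g [hg hg0 hgle]] := init_supp hJ hNu.
    have [h [hh hh0 hhle]] := L2 hgb hC2 hCin hCk hcl hk hg hg0.
    have hle2 : (lm h <= u + N)%MM by apply: lepm_trans hgle.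
    have [h' [hh' hh'0 hle']] := L3 hk hC1 hux huw hh hle2.
    rewrite -mpolyXD -(submK hle') mpolyXD; apply: ideal_gen_gen.
    by exists h'; split => //; apply: ideal_gen_self.
  rewrite [RHS]big_map; apply: eq_bigr => N _ /=.
  by rewrite -scalerAl -mpolyXD submK // NT_le.
move=> hext; apply: (ideal_gen_incl (G := fun g => J g /\ inR g)) hext.
- by move=> g [].
- by rewrite /J /colon mul0r; exists [::]; rewrite big_nil.
- by move=> f1 f2; rewrite /J /colon mulrDl; apply: ideal_gen_add.
- by move=> p g; rewrite /J /colon -mulrA; apply: ideal_gen_mull.
Qed.
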